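(* Let $0\le \rho<\tfrac12$ and let $P_1\ge P_2$ with $P_1>0$, $P_2\ge 0$, $P_1+P_2=1$. Let $(N^e(t),N^d(t))_{t\ge t_0}$ be a Markov chain on $\mathbb{Z}^2$ with independent steps given by $(N^e,N^d)\to(N^e+1,N^d+1)$ with probability $(1-\rho)P_1$, $(N^e,N^d)\to(N^e+1,N^d-1)$ with probability $\rho P_1$, $(N^e,N^d)\to(N^e-1,N^d-1)$ with probability $(1-\rho)P_2$, and $(N^e,N^d)\to(N^e-1,N^d+1)$ with probability $\rho P_2$. Suppose the pair is stable at time $t_0$, i.e. $N^e(t_0)>0$ and $N^d(t_0)>0$. Let $Q$ be the probability that a recurrence occurs, i.e. that there exists $t>t_0$ with $N^e(t)=0$ or $N^d(t)=0$. Then $$Q\le \left(\frac{P_2}{P_1}\right)^{N^e(t_0)}+\left[\frac{\rho P_1+(1-\rho)P_2}{(1-\rho)P_1+\rho P_2}\right]^{N^d(t_0)}.$$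
   Context: This models error propagation for a rate-1 direct shaping code with parsing length $m=1$ used on SLC flash: i.i.d. input words $\mathbf{w}_1,\mathbf{w}_2$ occur with probabilities $P_1,P_2$; the encoder maps the word with currently larger count to output $1$ and the other to $0$; the output passes through a binary symmetric channel with crossover probability $\rho$; the decoder rebuilds the dictionary from the received bits. $N^e(t)=n_1^e(t)-n_2^e(t)$ is the difference of the counts of $\mathbf{w}_1$ and $\mathbf{w}_2$ among the first $t$ encoder inputs, and $N^d(t)=n_1^d(t)-n_2^d(t)$ the corresponding difference among decoder outputs; their joint evolution is modeled by the random walk in the claim. *)

(* Defs.v *)
From HB Require Import structures.
From mathcomp Require Import all_boot all_order all_algebra.
From mathcomp Require Import classical_sets reals constructive_ereal ereal.
Set Implicit Arguments. Unset Strict Implicit. Unset Printing Implicit Defensive.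
Import Order.TTheory GRing.Theory Num.Theory.
Local Open Scope ring_scope.

(* [hit_within rho P1 P2 n a b] = probability that the random walk
   (N^e, N^d) on Z^2 started at (a, b), with one-step transitions
     (+1,+1) w.p. (1-rho) P1,  (+1,-1) w.p. rho P1,
     (-1,-1) w.p. (1-rho) P2,  (-1,+1) w.p. rho P2,
   visits {N^e = 0} \/ {N^d = 0} at some time t with 1 <= t <= n
   (first-step decomposition of the finite-horizon hitting probability). *)
Fixpoint hit_within (R : realType) (rho P1 P2 : R) (n : nat) (a b : int) : R :=
  match n with
  | 0 => 0
  | n'.+1 =>
      let f (a' b' : int) :=
        if (a' == 0) || (b' == 0) then 1 else hit_within rho P1 P2 n' a' b' in
      (1 - rho) * P1 * f (a + 1) (b + 1)
      + rho * P1 * f (a + 1) (b - 1)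
      + (1 - rho) * P2 * f (a - 1) (b - 1)
      + rho * P2 * f (a - 1) (b + 1)
  end.

(* Recurrence probability Q: probability that there is t > t0 with
   N^e(t) = 0 or N^d(t) = 0, starting from (N^e(t0), N^d(t0)) = (a, b);
   by continuity of probability it is the supremum of the finite-horizon
   hitting probabilities. *)
Definition recurrence_prob (R : realType) (rho P1 P2 : R) (a b : int) : \bar R :=
  ereal_sup (range (fun n : nat => (hit_within rho P1 P2 n a b)%:E)).

(* Main.v *)
Require Import Defs.
From HB Require Import structures.
From mathcomp Require Import all_boot all_order all_algebra.
From mathcomp Require Import classical_sets reals constructive_ereal ereal.
From mathcomp Require Import zify ring lra.
Import Order.TTheory GRing.Theory Num.Theory.
Local Open Scope ring_scope.

Definition gx {R : realType} (rho P1 P2 : R) := P2 / P1.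
Definition gy {R : realType} (rho P1 P2 : R) :=
  (rho * P1 + (1 - rho) * P2) / ((1 - rho) * P1 + rho * P2).
Definition gg {R : realType} (rho P1 P2 : R) (m n : nat) :=
  gx rho P1 P2 ^+ m + gy rho P1 P2 ^+ n.

Lemma A_gt0 {R : realType} {rho P1 P2 : R} : 0 <= rho -> rho < 1 / 2 ->
  0 < P1 -> 0 <= P2 -> 0 < (1 - rho) * P1 + rho * P2.
Proof.
move=> h0 h1 hP1 hP2.
have h : 0 < (1 - rho) * P1 by apply: mulr_gt0 => //; lra.
have : 0 <= rho * P2 by apply: mulr_ge0.
lra.
Qed.

Lemma gg_ge0 {R : realType} {rho P1 P2 : R} m n : 0 <= rho -> rho < 1 / 2 ->
  0 < P1 -> 0 <= P2 -> [/\ 0 <= gx rho P1 P2, 0 <= gy rho P1 P2 & 0 <= gg rho P1 P2 m n].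
Proof.
move=> h0 h1 hP1 hP2.
have hx : 0 <= gx rho P1 P2 by rewrite /gx divr_ge0 // ltW.
have hy : 0 <= gy rho P1 P2.
  rewrite /gy divr_ge0 //; last exact: ltW (A_gt0 h0 h1 hP1 hP2).
  apply: addr_ge0; apply: mulr_ge0 => //; lra.
split => //.
by rewrite /gg addr_ge0 // exprn_ge0.
Qed.

Lemma key {R : realType} {rho P1 P2 : R} : 0 <= rho -> rho < 1 / 2 ->
  0 < P1 -> 0 <= P2 -> P1 + P2 = 1 -> forall k (m n : nat), (0 < m)%N -> (0 < n)%N ->
  hit_within rho P1 P2 k (Posz m) (Posz n) <= gg rho P1 P2 m n.
Proof.
move=> h0 h1 hP1 hP2 hs k.
have G := fun m n => gg_ge0 m n h0 h1 hP1 hP2.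
elim: k => [|k IH] m n hm hn; first by case: (G m n).
have F : forall m' n' : nat,
  (if (Posz m' == 0) || (Posz n' == 0) then 1
   else hit_within rho P1 P2 k m' n') <= gg rho P1 P2 m' n'.
  move=> [|m'] [|n'] /=; case: (G 0%N 0%N) => hx hy _.
  - rewrite /gg expr0 lerDl; exact: exprn_ge0 hy.
  - rewrite /gg expr0 lerDl; exact: exprn_ge0 hy.
  - rewrite /gg expr0 lerDr; exact: exprn_ge0 hx.
  - exact: IH.
case: m hm => // m _; case: n hn => // n _.
rewrite /=.
have e1 : (Posz m.+1 + 1 = Posz m.+2)%R by lia.
have e2 : (Posz m.+1 - 1 = Posz m)%R by lia.
have e3 : (Posz n.+1 + 1 = Posz n.+2)%R by lia.
have e4 : (Posz n.+1 - 1 = Posz n)%R by lia.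
rewrite e1 e2 e3 e4.
have F1 := F m.+2 n.+2; have F2 := F m.+2 n; have F3 := F m n; have F4 := F m n.+2.
rewrite /= in F1 F2 F3 F4.
have c1 : 0 <= (1 - rho) * P1 by apply: mulr_ge0; lra.
have c2 : 0 <= rho * P1 by apply: mulr_ge0; lra.
have c3 : 0 <= (1 - rho) * P2 by apply: mulr_ge0; lra.
have c4 : 0 <= rho * P2 by apply: mulr_ge0; lra.
apply: le_trans.
  apply: lerD; [apply: lerD; [apply: lerD|]|];
    (apply: ler_wpM2l; first done); first [exact: F1|exact: F2|exact: F3|exact: F4].
rewrite le_eqVlt; apply/orP; left; apply/eqP.
have hA := A_gt0 h0 h1 hP1 hP2.
have P1n : P1 != 0 by rewrite gt_eqF.
have An : (1 - rho) * P1 + rho * P2 != 0 by rewrite gt_eqF.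
rewrite /gg /gy /gx !exprS.
have e : P2 = 1 - P1 by lra.
rewrite e in An *.
field.
by rewrite An P1n.
Qed.

Theorem theorem2 (R : realType) (rho P1 P2 : R) (a b : int) :
  0 <= rho -> rho < 1 / 2 ->
  P2 <= P1 -> 0 < P1 -> 0 <= P2 -> P1 + P2 = 1 ->
  0 < a -> 0 < b ->
  (recurrence_prob rho P1 P2 a b <=
     ((P2 / P1) ^ a
      + ((rho * P1 + (1 - rho) * P2) / ((1 - rho) * P1 + rho * P2)) ^ b)%:E)%E.
Proof.
move=> h0 h1 _ hP1 hP2 hs.
case: a => // m hm; case: b => // n hn.
apply: ub_ereal_sup => _ [k _ <-].
rewrite lee_fin.
have := key h0 h1 hP1 hP2 hs k m n; rewrite /gg /gx /gy.
have hm2 : (0 < m)%N by lia.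
have hn2 : (0 < n)%N by lia.
by move=> /(_ hm2 hn2).
Qed.
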